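(* A finite simple graph $G$ belongs to $\mathcal{G}_2$ if and only if $G$ has a family of cliques covering every edge of $G$ such that every clique in the family contains a simplicial vertex of $G$.
   Context: A finite topology $\tau$ on a finite set $X$ is a family of subsets of $X$ (the open sets) containing $\emptyset$ and $X$ and closed under unions and intersections. Distinct $x,y\in X$ are $T_2$-separated if there exist disjoint open sets $U_x\ni x$ and $U_y\ni y$. $G_2(\tau)$ is the simple graph with vertex set $X$ in which distinct $x,y$ are adjacent iff they are not $T_2$-separated; $\mathcal{G}_2$ is the class of graphs isomorphic to $G_2(\tau)$ for some finite topology $\tau$. A vertex $v$ of $G$ is simplicial if its closed neighborhood $N[v]$ induces a clique. *)

(* Defs.v *)
From mathcomp Require Import all_boot.
Set Implicit Arguments. Unset Strict Implicit. Unset Printing Implicit Defensive.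

Definition is_topology (X : finType) (tau : {set {set X}}) : Prop :=
  [/\ set0 \in tau, [set: X] \in tau,
      (forall U V, U \in tau -> V \in tau -> U :|: V \in tau) &
      (forall U V, U \in tau -> V \in tau -> U :&: V \in tau)].

Definition T2_separated (X : finType) (tau : {set {set X}}) (x y : X) : Prop :=
  exists U V, [/\ U \in tau, V \in tau, x \in U, y \in V & [disjoint U & V]].

Definition G2_adj (X : finType) (tau : {set {set X}}) (x y : X) : Prop :=
  x <> y /\ ~ T2_separated tau x y.

Definition simple_graph (T : finType) (e : rel T) : Prop :=
  symmetric e /\ irreflexive e.

Definition in_G2 (T : finType) (e : rel T) : Prop :=
  exists (X : finType) (tau : {set {set X}}) (f : T -> X),
    [/\ is_topology tau, bijective f &
        forall x y : T, e x y <-> G2_adj tau (f x) (f y)].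

Definition is_clique (T : finType) (e : rel T) (K : {set T}) : Prop :=
  forall x y, x \in K -> y \in K -> x != y -> e x y.

Definition closed_nbhd (T : finType) (e : rel T) (v : T) : {set T} :=
  [set x | (x == v) || e v x].

Definition simplicial (T : finType) (e : rel T) (v : T) : Prop :=
  is_clique e (closed_nbhd e v).

Definition simplicial_edge_clique_cover (T : finType) (e : rel T)
    (F : {set {set T}}) : Prop :=
  [/\ (forall K, K \in F -> is_clique e K),
      (forall x y, e x y -> exists2 K, K \in F & (x \in K) && (y \in K)) &
      (forall K, K \in F -> exists2 v, v \in K & simplicial e v)].

(* Main.v *)
Require Import Defs.
From mathcomp Require Import all_boot.
Set Implicit Arguments. Unset Strict Implicit. Unset Printing Implicit Defensive.

Definition minU (X : finType) (tau : {set {set X}}) (x : X) : {set X} :=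
  \bigcap_(V in tau | x \in V) V.

Lemma minU_open (X : finType) (tau : {set {set X}}) :
  is_topology tau -> forall x, minU tau x \in tau.
Proof.
case=> _ HT _ HI x; rewrite /minU.
apply: (big_ind (fun V => V \in tau)) => //.
by move=> V /andP[].
Qed.

Lemma minU_in (X : finType) (tau : {set {set X}}) (x : X) : x \in minU tau x.
Proof. by apply/bigcapP => V /andP[]. Qed.

Lemma minU_sub (X : finType) (tau : {set {set X}}) (V : {set X}) (x : X) :
  V \in tau -> x \in V -> minU tau x \subset V.
Proof. by move=> HV xV; apply: bigcap_inf; rewrite HV xV. Qed.

Lemma T2_sepE (X : finType) (tau : {set {set X}}) (U : X -> {set X}) :
  (forall x, U x \in tau) -> (forall x, x \in U x) ->
  (forall V x, V \in tau -> x \in V -> U x \subset V) ->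
  forall x y, T2_separated tau x y <-> [disjoint U x & U y].
Proof.
move=> Ho Hi Hs x y; split.
  case=> [A [B [HA HB xA yB dAB]]].
  exact: disjointWl (Hs _ _ HA xA) (disjointWr (Hs _ _ HB yB) dAB).
by move=> d; exists (U x), (U y); split.
Qed.

Definition simplb (T : finType) (e : rel T) (v : T) : bool :=
  [forall x, forall y, (x \in closed_nbhd e v) ==> (y \in closed_nbhd e v)
     ==> (x != y) ==> e x y].

Lemma simplbP (T : finType) (e : rel T) v : reflect (simplicial e v) (simplb e v).
Proof.
apply: (iffP forallP) => H.
  move=> x y xi yi xy; move/forallP: (H x) => /(_ y).
  by rewrite xi yi xy.
move=> x; apply/forallP => y; apply/implyP => xi; apply/implyP => yi.
by apply/implyP; apply: H.
Qed.

Lemma dir1 (T : finType) (e : rel T) (esym : symmetric e) (eirr : irreflexive e) :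
  in_G2 e -> exists F : {set {set T}}, simplicial_edge_clique_cover e F.
Proof.
case=> X [tau [f [Htop [g fK gK] He]]].
  pose U := minU tau.
  have Uo : forall x, U x \in tau by move=> x; apply: minU_open.
  have Ui : forall x, x \in U x by move=> x; apply: minU_in.
  have Us : forall V x, V \in tau -> x \in V -> U x \subset V by move=> V x; apply: minU_sub.
  have sep := T2_sepE Uo Ui Us.
  have UU : forall z w, z \in U w -> U z \subset U w by move=> z w /Us; apply.
  have adjE : forall a b, a != b -> (exists z, (z \in U (f a)) && (z \in U (f b)))
     -> e a b.
    move=> a b ab [z /andP[za zb]]; apply/He; split.
      by move=> fab; move/eqP: ab; apply; rewrite -(fK a) fab fK.
    move/sep/pred0P/(_ z); by rewrite /= za zb.
  pose K z := [set a : T | z \in U (f a)].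
  pose good z := [forall z', (z' \in U z) ==> (z \in U z')].
  exists [set K z | z in [pred z | good z]]; split.
  + move=> C /imsetP [z _ ->] a b; rewrite !inE => za zb ab.
    by apply: adjE ab _; exists z; rewrite za zb.
  + move=> a b eab.
    have ab : a != b by apply/eqP => E; move: eab; rewrite E eirr.
    have [_ nsep] := (He a b).1 eab.
    have : ~~ [disjoint U (f a) & U (f b)] by apply/negP => /sep.
    case/pred0Pn => w /andP [wa wb].
    pose I := U (f a) :&: U (f b).

    have wI : w \in I by rewrite inE; apply/andP; split; [exact: wa | exact: wb].
    case: (arg_minnP (fun z => #|U z|) wI) => z zI zmin.
    have /setIP [za zb] : z \in I := zI.
    exists (K z); last by rewrite !inE za zb.
    apply/imsetP; exists z => //; rewrite inE; apply/forallP => z'.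
    apply/implyP => z'z.
    have sub := UU _ _ z'z.
    have z'I : z' \in I.
      by rewrite inE (subsetP (UU _ _ za)) ?(subsetP (UU _ _ zb)) // (subsetP sub) // Ui.
    have := zmin _ z'I => le.
    have eq : U z' = U z.
      by apply/eqP; rewrite eqEcard sub le.
    by rewrite eq Ui.
  + move=> C /imsetP [z]; rewrite inE => gz ->.
    exists (g z); first by rewrite inE gK Ui.
    have inK : forall x, x \in closed_nbhd e (g z) -> z \in U (f x).
      move=> x; rewrite inE => /orP [/eqP -> | exz]; first by rewrite gK Ui.
      have nd : ~~ [disjoint U (f (g z)) & U (f x)].
        apply/negP => /sep Hs'.
        by case: ((He (g z) x).1 exz) => _; apply.
      case/pred0Pn: nd => w /andP [wz wx]; rewrite gK in wz.
      have zw : z \in U w by move/forallP: gz => /(_ w) /implyP; apply.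
      exact: (subsetP (UU _ _ wx)).
    move=> x y xi yi xy; apply: adjE xy _.
    by exists z; rewrite !inK.
Qed.

Definition nbU (T : finType) (e : rel T) (x : T) : {set T} :=
  [set v | (v == x) || (simplb e v && e x v)].
Definition nbtau (T : finType) (e : rel T) : {set {set T}} :=
  [set V : {set T} | [forall x, (x \in V) ==> (nbU e x \subset V)]].

Lemma nbtauE (T : finType) (e : rel T) (V : {set T}) :
  (V \in nbtau e) = [forall x, (x \in V) ==> (nbU e x \subset V)].
Proof. by rewrite inE. Qed.

Lemma nbUE (T : finType) (e : rel T) (x v : T) :
  (v \in nbU e x) = (v == x) || (simplb e v && e x v).
Proof. by rewrite inE. Qed.

Lemma nbU_in (T : finType) (e : rel T) x : x \in nbU e x.
Proof. by rewrite nbUE eqxx. Qed.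

Lemma nbU_sub (T : finType) (e : rel T) V x :
  V \in nbtau e -> x \in V -> nbU e x \subset V.
Proof. by rewrite nbtauE => /forallP /(_ x) /implyP. Qed.

Lemma nbU_open (T : finType) (e : rel T) (esym : symmetric e) x :
  nbU e x \in nbtau e.
Proof.
rewrite nbtauE; apply/forallP => z; apply/implyP.
rewrite nbUE => /orP [/eqP -> | /andP [sz exz]]; first exact: subxx.
apply/subsetP => v; rewrite !nbUE => /orP [/eqP -> | /andP [sv ezv]].
  by rewrite sz exz orbT.
rewrite sv /=; case: (eqVneq v x) => [-> //| vx].
apply: (simplbP _ _ sz); rewrite ?inE ?ezv ?orbT //.
  by rewrite esym exz orbT.
by rewrite eq_sym.
Qed.

Lemma nbtau_top (T : finType) (e : rel T) : is_topology (nbtau e).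
Proof.
split.
* by rewrite nbtauE; apply/forallP => x; rewrite inE.
* by rewrite nbtauE; apply/forallP => x; rewrite subsetT implybT.
* move=> A B; rewrite !nbtauE => /forallP HA /forallP HB.
  apply/forallP => x; apply/implyP; rewrite inE => /orP [xA | xB].
    by apply: subset_trans (subsetUl _ _); move/implyP: (HA x); apply.
  by apply: subset_trans (subsetUr _ _); move/implyP: (HB x); apply.
* move=> A B; rewrite !nbtauE => /forallP HA /forallP HB.
  apply/forallP => x; apply/implyP; rewrite inE => /andP [xA xB].
  by rewrite subsetI (implyP (HA x) xA) (implyP (HB x) xB).
Qed.

Lemma dir2 (T : finType) (e : rel T) (esym : symmetric e) (eirr : irreflexive e) :
  (exists F : {set {set T}}, simplicial_edge_clique_cover e F) -> in_G2 e.
Proof.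
case=> F [Fcl Fcov Fsimp].
have sep := T2_sepE (@nbU_open T e esym) (@nbU_in T e) (@nbU_sub T e).
exists T, (nbtau e), id; split.
+ exact: nbtau_top.
+ by exists id.
+ move=> x y; split.
  * move=> exy; split.
      by move=> E; move: exy; rewrite E eirr.
    move/sep/pred0P; have [K KF /andP [xK yK]] := Fcov _ _ exy.
    have [v vK /simplbP sv] := Fsimp _ KF.
    have Kc := Fcl _ KF.
    have inUx : forall a, a \in K -> v \in nbU e a.
      move=> a aK; rewrite nbUE; case: (eqVneq v a) => [//| va] /=.
      by rewrite sv; apply: Kc; rewrite // eq_sym.
    by move/(_ v); rewrite /= !inUx.
  * case=> xy nsep.
    have : ~~ [disjoint nbU e x & nbU e y] by apply/negP => /sep.
    case/pred0Pn => w /andP [wx' wy'].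
    have wx : w \in nbU e x := wx'. have wy : w \in nbU e y := wy'.
    move: wx wy; rewrite !nbUE.
    case/orP => [/eqP -> | /andP [sw exw]].
      case/orP => [/eqP E | /andP [_ eyx]]; first by case: xy.
      by rewrite esym.
    case/orP => [/eqP E | /andP [_ eyw]].
      by rewrite -E.
    apply: (simplbP _ _ sw).
    - by rewrite inE esym exw orbT.
    - by rewrite inE esym eyw orbT.
    - by apply/eqP.
Qed.

Theorem theorem5p1 (T : finType) (e : rel T) (He : simple_graph e) :
  in_G2 e <-> exists F : {set {set T}}, simplicial_edge_clique_cover e F.
Proof.
case: He => esym eirr; split; [exact: dir1 | exact: dir2].
Qed.
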